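(* Let $C\in\mathscr{C}$ and let $Z_C$ be obtained as follows: choose a distinguished triangle $V\to U\overset{a}{\to}C\to V[1]$ with $U\in\mathcal{U},V\in\mathcal{V}$; choose a distinguished triangle $T[-1]\to S[-1]\overset{b}{\to}U\to T$ with $S\in\mathcal{S},T\in\mathcal{T}$; and choose a distinguished triangle $S[-1]\overset{a\circ b}{\to}C\overset{z_C}{\to}Z_C\to S$. Then: (1) $Z_C\in\mathscr{C}^+$; (2) if $C\in\mathscr{C}^-$, then $Z_C\in\mathcal{H}$.
   Context: $\mathscr{C}$ is a triangulated category with shift $[1]$; subcategories are full, additive, closed under isomorphisms and direct summands. $\mathrm{Ext}^1(X,Y)=\mathscr{C}(X,Y[1])$. $\mathcal{M}\ast\mathcal{N}$ is the full subcategory of objects $C$ admitting a distinguished triangle $M\to C\to N\to M[1]$ with $M\in\mathcal{M}$, $N\in\mathcal{N}$. A cotorsion pair $(\mathcal{U},\mathcal{V})$: $\mathrm{Ext}^1(\mathcal{U},\mathcal{V})=0$ and $\mathscr{C}=\mathcal{U}\ast\mathcal{V}[1]$. Fix a twin cotorsion pair, i.e. cotorsion pairs $(\mathcal{S},\mathcal{T}),(\mathcal{U},\mathcal{V})$ with $\mathrm{Ext}^1(\mathcal{S},\mathcal{V})=0$. Put $\mathcal{W}=\mathcal{T}\cap\mathcal{U}$, $\mathscr{C}^-=\mathcal{S}[-1]\ast\mathcal{W}$, $\mathscr{C}^+=\mathcal{W}\ast\mathcal{V}[1]$, $\mathcal{H}=\mathscr{C}^+\cap\mathscr{C}^-$.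 *)

(* Defs.v *)
From HB Require Import structures.
From mathcomp Require Import all_boot all_algebra.
Set Implicit Arguments. Unset Strict Implicit. Unset Printing Implicit Defensive.
Import GRing.Theory.
Local Open Scope ring_scope.

Record TriCat := {
  Obj :> Type;
  Mor : Obj -> Obj -> zmodType;
  mcomp : forall X Y Z : Obj, Mor Y Z -> Mor X Y -> Mor X Z;
  idm : forall X : Obj, Mor X X;
  compA : forall X Y Z W (h : Mor Z W) (g : Mor Y Z) (f : Mor X Y),
      mcomp h (mcomp g f) = mcomp (mcomp h g) f;
  comp1m : forall X Y (f : Mor X Y), mcomp (idm Y) f = f;
  compm1 : forall X Y (f : Mor X Y), mcomp f (idm X) = f;
  compDl : forall X Y Z (g1 g2 : Mor Y Z) (f : Mor X Y),
      mcomp (g1 + g2) f = mcomp g1 f + mcomp g2 f;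
  compDr : forall X Y Z (g : Mor Y Z) (f1 f2 : Mor X Y),
      mcomp g (f1 + f2) = mcomp g f1 + mcomp g f2;
  zobj : Obj;
  zobj_zero : idm zobj = 0;
  biprod_ex : forall X Y : Obj, exists (B : Obj) (i1 : Mor X B) (i2 : Mor Y B)
      (p1 : Mor B X) (p2 : Mor B Y),
      [/\ mcomp p1 i1 = idm X, mcomp p2 i2 = idm Y, mcomp p1 i2 = 0,
          mcomp p2 i1 = 0 & mcomp i1 p1 + mcomp i2 p2 = idm B];
  shift : Obj -> Obj;
  shiftH : forall X Y, Mor X Y -> Mor (shift X) (shift Y);
  shiftH_id : forall X, shiftH (idm X) = idm (shift X);
  shiftH_comp : forall X Y Z (g : Mor Y Z) (f : Mor X Y),
      shiftH (mcomp g f) = mcomp (shiftH g) (shiftH f);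
  shiftH_add : forall X Y (f g : Mor X Y), shiftH (f + g) = shiftH f + shiftH g;
  shiftH_bij : forall X Y, bijective (@shiftH X Y);
  shift_esurj : forall X, exists (Y : Obj) (f : Mor (shift Y) X) (g : Mor X (shift Y)),
      mcomp g f = idm (shift Y) /\ mcomp f g = idm X;
  dist : forall X Y Z, Mor X Y -> Mor Y Z -> Mor Z (shift X) -> Prop;
  TR1_iso : forall X Y Z X' Y' Z' (f : Mor X Y) (g : Mor Y Z) (h : Mor Z (shift X))
      (f' : Mor X' Y') (g' : Mor Y' Z') (h' : Mor Z' (shift X'))
      (u : Mor X X') (v : Mor Y Y') (w : Mor Z Z')
      (u' : Mor X' X) (v' : Mor Y' Y) (w' : Mor Z' Z),
      mcomp u' u = idm X -> mcomp u u' = idm X' ->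
      mcomp v' v = idm Y -> mcomp v v' = idm Y' ->
      mcomp w' w = idm Z -> mcomp w w' = idm Z' ->
      mcomp v f = mcomp f' u -> mcomp w g = mcomp g' v ->
      mcomp (shiftH u) h = mcomp h' w ->
      dist f g h -> dist f' g' h';
  TR1_id : forall X, dist (idm X) (0 : Mor X zobj) (0 : Mor zobj (shift X));
  TR1_ext : forall X Y (f : Mor X Y), exists (Z : Obj) (g : Mor Y Z) (h : Mor Z (shift X)),
      dist f g h;
  TR2 : forall X Y Z (f : Mor X Y) (g : Mor Y Z) (h : Mor Z (shift X)),
      dist f g h <-> dist g h (- shiftH f);
  TR3 : forall X Y Z X' Y' Z' (f : Mor X Y) (g : Mor Y Z) (h : Mor Z (shift X))
      (f' : Mor X' Y') (g' : Mor Y' Z') (h' : Mor Z' (shift X'))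
      (u : Mor X X') (v : Mor Y Y'),
      dist f g h -> dist f' g' h' -> mcomp v f = mcomp f' u ->
      exists w : Mor Z Z', mcomp w g = mcomp g' v /\ mcomp (shiftH u) h = mcomp h' w;
  TR4 : forall X Y Z Z' X' Y' (u : Mor X Y) (v : Mor Y Z)
      (j : Mor Y Z') (k : Mor Z' (shift X))
      (l : Mor Z X') (i : Mor X' (shift Y))
      (m : Mor Z Y') (n : Mor Y' (shift X)),
      dist u j k -> dist v l i -> dist (mcomp v u) m n ->
      exists (f : Mor Z' Y') (g : Mor Y' X'),
      [/\ dist f g (mcomp (shiftH j) i),
          mcomp f j = mcomp m v, mcomp n f = k,
          mcomp g m = l & mcomp i g = mcomp (shiftH u) n]
}.

Arguments mcomp {t X Y Z}.
Arguments idm {t}.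
Arguments shift {t}.
Arguments shiftH {t X Y}.
Arguments dist {t X Y Z}.

Section Sub.
Variable T : TriCat.

Definition is_iso (X Y : T) (f : Mor X Y) : Prop :=
  exists g : Mor Y X, mcomp g f = idm X /\ mcomp f g = idm Y.

Definition is_zero_obj (X : T) : Prop := idm X = 0.

Definition is_biprod (X Y B : T) : Prop :=
  exists (i1 : Mor X B) (i2 : Mor Y B) (p1 : Mor B X) (p2 : Mor B Y),
    [/\ mcomp p1 i1 = idm X, mcomp p2 i2 = idm Y, mcomp p1 i2 = 0,
        mcomp p2 i1 = 0 & mcomp i1 p1 + mcomp i2 p2 = idm B].

(* A (full) subcategory: additive, closed under isomorphisms and direct summands *)
Definition is_subcat (P : T -> Prop) : Prop :=
  [/\ (forall X, is_zero_obj X -> P X),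
      (forall X Y B, is_biprod X Y B -> P X -> P Y -> P B),
      (forall X Y (f : Mor X Y), is_iso f -> P X -> P Y) &
      (forall X Y B, is_biprod X Y B -> P B -> P X)].

Definition star (M N : T -> Prop) (C : T) : Prop :=
  exists (X Z : T) (f : Mor X C) (g : Mor C Z) (h : Mor Z (shift X)),
    [/\ dist f g h, M X & N Z].

Definition shift_up (P : T -> Prop) (X : T) : Prop :=
  exists (Y : T) (f : Mor (shift Y) X), is_iso f /\ P Y.

(* P[-1] : objects X with X[1] in P (P closed under isos, [1] an equivalence) *)
Definition shift_down (P : T -> Prop) (X : T) : Prop := P (shift X).

Definition inter (P Q : T -> Prop) (X : T) : Prop := P X /\ Q X.

Definition ext1_vanish (P Q : T -> Prop) : Prop :=
  forall X Y, P X -> Q Y -> forall f : Mor X (shift Y), f = 0.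

Definition cotorsion_pair (U V : T -> Prop) : Prop :=
  [/\ is_subcat U, is_subcat V, ext1_vanish U V &
      forall C, star U (shift_up V) C].

Definition twin_cotorsion_pair (S Tc U V : T -> Prop) : Prop :=
  [/\ cotorsion_pair S Tc, cotorsion_pair U V & ext1_vanish S V].

Definition Wcore (Tc U : T -> Prop) := inter Tc U.
Definition Cminus (S Tc U : T -> Prop) := star (shift_down S) (Wcore Tc U).
Definition Cplus (Tc U V : T -> Prop) := star (Wcore Tc U) (shift_up V).
Definition Heart (S Tc U V : T -> Prop) := inter (Cplus Tc U V) (Cminus S Tc U).

End Sub.

(* Main.v *)
Require Import Defs.
From mathcomp Require Import all_boot all_algebra.
Import GRing.Theory.
Local Open Scope ring_scope.

Lemma comp0l {T : TriCat} {X Y Z : T} (f : Mor X Y) : mcomp (0 : Mor Y Z) f = 0.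
Proof.
have := Defs.compDl (0 : Mor Y Z) 0 f; rewrite addr0 => /eqP.
by rewrite -subr_eq subrr eq_sym => /eqP.
Qed.

Lemma comp0r {T : TriCat} {X Y Z : T} (g : Mor Y Z) : mcomp g (0 : Mor X Y) = 0.
Proof.
have := Defs.compDr g (0 : Mor X Y) 0; rewrite addr0 => /eqP.
by rewrite -subr_eq subrr eq_sym => /eqP.
Qed.

Lemma compNl {T : TriCat} {X Y Z : T} (g : Mor Y Z) (f : Mor X Y) :
  mcomp (- g) f = - mcomp g f.
Proof.
by apply/eqP; rewrite -addr_eq0 -Defs.compDl addNr comp0l.
Qed.

Lemma compNr {T : TriCat} {X Y Z : T} (g : Mor Y Z) (f : Mor X Y) :
  mcomp g (- f) = - mcomp g f.
Proof.
by apply/eqP; rewrite -addr_eq0 -Defs.compDr addNr comp0r.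
Qed.

Lemma compBl {T : TriCat} {X Y Z : T} (g1 g2 : Mor Y Z) (f : Mor X Y) :
  mcomp (g1 - g2) f = mcomp g1 f - mcomp g2 f.
Proof. by rewrite Defs.compDl compNl. Qed.

Lemma compBr {T : TriCat} {X Y Z : T} (g : Mor Y Z) (f1 f2 : Mor X Y) :
  mcomp g (f1 - f2) = mcomp g f1 - mcomp g f2.
Proof. by rewrite Defs.compDr compNr. Qed.

Lemma shiftH0 {T : TriCat} {X Y : T} : shiftH (0 : Mor X Y) = 0.
Proof.
have := shiftH_add (0 : Mor X Y) 0; rewrite addr0 => /eqP.
by rewrite -subr_eq subrr eq_sym => /eqP.
Qed.

Lemma shiftHN {T : TriCat} {X Y : T} (f : Mor X Y) : shiftH (- f) = - shiftH f.
Proof.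
by apply/eqP; rewrite -addr_eq0 -shiftH_add addNr shiftH0.
Qed.

Lemma shiftH_inj {T : TriCat} {X Y : T} (f g : Mor X Y) : shiftH f = shiftH g -> f = g.
Proof. exact: (bij_inj (shiftH_bij X Y)). Qed.

Lemma shiftH_surj {T : TriCat} {X Y : T} (g : Mor (shift X) (shift Y)) :
  exists f : Mor X Y, shiftH f = g.
Proof.
case: (shiftH_bij X Y) => h _ K; exists (h g); exact: K.
Qed.

Lemma rot {T : TriCat} {X Y Z : T} {f : Mor X Y} {g : Mor Y Z} {h : Mor Z (shift X)} :
  dist f g h -> dist g h (- shiftH f).
Proof. by move/TR2. Qed.

Lemma comp_zero {T : TriCat} {X Y Z : T} {f : Mor X Y} {g : Mor Y Z} {h : Mor Z (shift X)} :
  dist f g h -> mcomp g f = 0.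
Proof.
move=> H.
have [w [Hw _]] := TR3 (TR1_id X) H (u := idm X) (v := f)
   erefl.
by rewrite -Hw comp0r.
Qed.

Lemma factor {T : TriCat} {X Y Z : T} {f : Mor X Y} {g : Mor Y Z} {h : Mor Z (shift X)}
  {W : T} {phi : Mor W Y} : dist f g h -> mcomp g phi = 0 ->
  exists s : Mor W X, mcomp f s = phi.
Proof.
move=> H Hg.
have Hc : mcomp (0 : Mor (zobj T) Z) (0 : Mor W (zobj T)) = mcomp g phi
  by rewrite Hg comp0l.
have [w [_ Hw]] := TR3 (rot (TR1_id W)) (rot H) Hc.
have [s Hs] := shiftH_surj w.
exists s; apply: shiftH_inj.
move: Hw; rewrite -Hs shiftH_id compNr Defs.compm1 compNl -shiftH_comp.
by move/eqP; rewrite eqr_opp => /eqP.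
Qed.

Lemma dist0id {T : TriCat} (W : T) :
  dist (0 : Mor (zobj T) W) (idm W) (0 : Mor W (shift (zobj T))).
Proof.
have Z0 : idm (shift (zobj T)) = 0 by rewrite -shiftH_id zobj_zero shiftH0.
have H1 : dist (idm W) (0 : Mor W (shift (zobj T))) (0 : Mor (shift (zobj T)) (shift W)).
  apply: (TR1_iso (u := idm W) (v := idm W) (w := 0) (u' := idm W) (v' := idm W) (w' := 0)
     _ _ _ _ _ _ _ _ _ (TR1_id W)).
  - by rewrite Defs.comp1m.
  - by rewrite Defs.comp1m.
  - by rewrite Defs.comp1m.
  - by rewrite Defs.comp1m.
  - by rewrite comp0l zobj_zero.
  - by rewrite comp0l Z0.
  - by [].
  - by rewrite !comp0l.
  - by rewrite !comp0r.
apply/TR2; by rewrite shiftH0 oppr0.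
Qed.

Lemma cofactor {T : TriCat} {X Y Z : T} {f : Mor X Y} {g : Mor Y Z} {h : Mor Z (shift X)}
  {W : T} {psi : Mor Y W} : dist f g h -> mcomp psi f = 0 ->
  exists t : Mor Z W, mcomp t g = psi.
Proof.
move=> H Hf.
have Hc : mcomp psi f = mcomp (0 : Mor (zobj T) W) (0 : Mor X (zobj T))
  by rewrite Hf comp0l.
have [w [Hw _]] := TR3 H (dist0id W) Hc.
by exists w; rewrite Hw Defs.comp1m.
Qed.

Lemma summand {T : TriCat} (P : T -> Prop) (hP : is_subcat P) {X Y : T}
  (s : Mor X Y) (r : Mor Y X) : mcomp r s = idm X -> P Y -> P X.
Proof.
move=> rs PY.
have [K [g [h H]]] := TR1_ext s.
have gs : mcomp g s = 0 := comp_zero H.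
have H' := rot H.
have h0 : h = 0.
  have := comp_zero (rot H'); rewrite compNl => /eqP; rewrite oppr_eq0 => /eqP sh.
  by rewrite -(Defs.comp1m h) -shiftH_id -rs shiftH_comp -Defs.compA sh comp0r.
have [r0 gr0] : exists r0 : Mor K Y, mcomp g r0 = idm K.
  by apply: (factor H'); rewrite h0 comp0l.
set r' := r0 - mcomp s (mcomp r r0).
have gr' : mcomp g r' = idm K.
  by rewrite /r' compBr gr0 Defs.compA gs comp0l subr0.
have rr' : mcomp r r' = 0.
  by rewrite /r' compBr Defs.compA rs Defs.comp1m subrr.
clearbody r'.
set e := idm Y - mcomp s r - mcomp r' g.
have es : mcomp e s = 0.
  rewrite /e !compBl Defs.comp1m -!Defs.compA rs gs Defs.compm1 comp0r.
  by rewrite subrr subr0.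
have [t te] := cofactor H es.
have t0 : t = 0.
  rewrite -(Defs.compm1 t) -gr' Defs.compA te /e !compBl Defs.comp1m -!Defs.compA.
  by rewrite rr' gr' comp0r Defs.compm1 subr0 subrr.
have e0 : e = 0 by rewrite -te t0 comp0l.
case: hP => _ _ _ hsum.
apply: (hsum X K Y) PY.
exists s, r', r, g; split => //.
by move/eqP: e0; rewrite /e subr_eq0 subr_eq => /eqP ->; rewrite addrC.
Qed.

Lemma extU {T : TriCat} (U V : T -> Prop) (cp : cotorsion_pair U V) (X : T) :
  (forall V2, V V2 -> forall phi : Mor X (shift V2), phi = 0) -> U X.
Proof.
move=> van; case: cp => hU _ _ dec.
have [X0 [Z0 [f [g [h [H UX0 [V2 [e [[einv [e1 e2]] VV2]]]]]]]]] := dec X.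
have g0 : g = 0.
  by rewrite -(Defs.comp1m g) -e2 -Defs.compA (van V2 VV2 (mcomp einv g)) comp0r.
have [s fs] : exists s : Mor X X0, mcomp f s = idm X.
  by apply: (factor H); rewrite g0 comp0l.
exact: (summand _ hU s f fs UX0).
Qed.

Lemma vanish_shift {T : TriCat} (S Tc : T -> Prop) (van : ext1_vanish S Tc)
  (A Y : T) : S (shift A) -> Tc Y -> forall f : Mor A Y, f = 0.
Proof.
move=> SA TY f; apply: shiftH_inj; rewrite shiftH0; exact: van.
Qed.

Lemma decompST {T : TriCat} (S Tc : T -> Prop) (cp : cotorsion_pair S Tc) (Z : T) :
  exists (K T' : T) (sg : Mor K Z) (tau : Mor Z T') (rho : Mor T' (shift K)),
    [/\ dist sg tau rho, S (shift K) & Tc T'].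
Proof.
case: cp => hS _ _ dec.
have [X0 [Z0 [f0 [g0 [h0 [H SX0 [T' [e [[einv [e1 e2]] TT']]]]]]]]] := dec (shift Z).
have [K [e3 [e3inv [e4 e5]]]] := shift_esurj X0.
have [sg Hsg] := shiftH_surj (- mcomp f0 e3).
have [tau Htau] := shiftH_surj (- mcomp einv g0).
have [rho Hrho] := shiftH_surj (- mcomp (mcomp (shiftH e3inv) h0) e).
exists K, T', sg, tau, rho; split => //.
- apply/TR2; apply/TR2; apply/TR2.
  rewrite Hsg Htau Hrho !opprK.
  apply: (TR1_iso (u := e3inv) (v := idm (shift Z)) (w := einv)
      (u' := e3) (v' := idm (shift Z)) (w' := e) _ _ _ _ _ _ _ _ _ H).
  + exact: e5.
  + exact: e4.
  + by rewrite Defs.comp1m.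
  + by rewrite Defs.comp1m.
  + exact: e2.
  + exact: e1.
  + by rewrite Defs.comp1m -Defs.compA e5 Defs.compm1.
  + by rewrite Defs.compm1.
  + by rewrite -Defs.compA e2 Defs.compm1.
- case: hS => _ _ hiso _; apply: (hiso _ _ e3inv) SX0.
  by exists e3; split.
Qed.

Theorem claim3p4 (T : TriCat) (S Tc U V : T -> Prop)
    (twin : twin_cotorsion_pair S Tc U V)
    (C U0 V0 : T) (x : Mor V0 U0) (a : Mor U0 C) (y : Mor C (shift V0))
    (hU0 : U U0) (hV0 : V V0) (tri1 : dist x a y)
    (T1 S1 : T) (x2 : Mor T1 S1) (b : Mor S1 U0) (y2 : Mor U0 (shift T1))
    (hS1 : S (shift S1)) (hT1 : Tc (shift T1)) (tri2 : dist x2 b y2)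
    (Z : T) (zC : Mor C Z) (w : Mor Z (shift S1))
    (tri3 : dist (mcomp a b) zC w) :
  Cplus Tc U V Z /\ (Cminus S Tc U C -> Heart S Tc U V Z).
Proof.
case: twin => cpST cpUV vSV.
have vUV : ext1_vanish U V by case: cpUV.
have vST : ext1_vanish S Tc by case: cpST.
have P1 : Cplus Tc U V Z.
  have [f [g [Hd _ _ _ _]]] := TR4 (rot tri2) (rot tri1) tri3.
  exists (shift T1), (shift V0), f, g, (mcomp (shiftH y2) (- shiftH x)); split.
  - exact: Hd.
  - split => //.
    apply: (extU _ _ cpUV) => V2 VV2 phi.
    have h1 : mcomp phi y2 = 0 := vUV _ _ hU0 VV2 _.
    have [t Ht] := cofactor (rot (rot tri2)) h1.
    by rewrite -Ht (vSV _ _ hS1 VV2 t) comp0l.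
  - exists V0, (idm (shift V0)); split => //.
    by exists (idm (shift V0)); rewrite Defs.comp1m.
split => // -[A [W' [al [be [ga [Hc SA [TW UW]]]]]]].
have [K [T' [sg [tau [rho [Hd2 SK TT']]]]]] := decompST _ _ cpST Z.
have UT' : U T'.
  apply: (extU _ _ cpUV) => V2 VV2 phi.
  have h1 : mcomp (mcomp tau zC) al = 0 := vanish_shift _ _ vST _ _ SA TT' _.
  have h2 : mcomp (mcomp (mcomp phi tau) zC) al = 0.
    by rewrite -[mcomp (mcomp phi tau) zC]Defs.compA -Defs.compA h1 comp0r.
  have [t1 Ht1] := cofactor Hc h2.
  have h3 : mcomp (mcomp phi tau) zC = 0.
    by rewrite -Ht1 (vUV _ _ UW VV2 t1) comp0l.
  have [t2 Ht2] := cofactor (rot tri3) h3.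
  have h4 : mcomp phi tau = 0.
    by rewrite -Ht2 (vSV _ _ hS1 VV2 t2) comp0l.
  have [t3 Ht3] := cofactor (rot Hd2) h4.
  by rewrite -Ht3 (vSV _ _ SK VV2 t3) comp0l.
split => //.
by exists K, T', sg, tau, rho; split.
Qed.
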